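(* Let $\mathcal{Z}=\{(\boldsymbol{z}_i,y_i)\}_{i=1}^{n}$ be labeled representations with $\|\boldsymbol{z}_i\|_2=1$ and labels $y_i\in\{1,\dots,N_C\}$; let $\mathcal{C}_k=\{i: y_i=k\}$ be the set of support samples of class $k$. For each class $k$ let $\boldsymbol{c}_k$ be a prototype representation with $\|\boldsymbol{c}_k\|_2=1$, and for each sample $i$ write $\boldsymbol{c}_i$ for the (expanded) prototype of its class, i.e. the $n$ prototype representations $\{\boldsymbol{c}_i\}_{i=1}^n$ satisfy $\boldsymbol{c}_i=\boldsymbol{c}_{y_i}$. Define \[ \mathcal{L}_{\rm SCE}=-\frac{1}{n}\sum_{i=1}^{n}\log\frac{\exp(\boldsymbol{z}_i^{\top}\boldsymbol{c}_i)}{\sum_{j=1}^{n}\exp(\boldsymbol{z}_i^{\top}\boldsymbol{c}_j)}-\frac{1}{n}\sum_{i=1}^{n}\log\frac{\exp(\boldsymbol{c}_i^{\top}\boldsymbol{z}_i)}{\sum_{j=1}^{n}\exp(\boldsymbol{c}_i^{\top}\boldsymbol{z}_j)}. \] Then \[ \mathcal{L}_{\rm SCE}\ \ge\ -\frac{2}{n}\sum_{i=1}^{n}\boldsymbol{z}_i^{\top}\boldsymbol{c}_i+\frac{2}{n}\sum_{i=1}^{n}\sum_{k=1}^{N_C}\frac{|\mathcal{C}_k|}{n}\boldsymbol{z}_i^{\top}\boldsymbol{c}_k. \]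
   Context: In this setting (contrastive prototype–image adaptation), the prototype embeddings are expanded to one row per support sample via $YY^{\top}$ applied to the embeddings, where $Y$ is the one-hot label matrix, so the $i$-th prototype representation is the prototype representation of the class of sample $i$; there are thus $|\mathcal{C}_k|$ identical copies of $\boldsymbol{c}_k$ among $\boldsymbol{c}_1,\dots,\boldsymbol{c}_n$. *)

(* Defs.v *)
From mathcomp Require Import all_boot all_order all_algebra.
From mathcomp Require Import all_classical all_reals all_analysis.
Set Implicit Arguments. Unset Strict Implicit. Unset Printing Implicit Defensive.
Import Order.TTheory GRing.Theory Num.Theory.
Local Open Scope ring_scope.

Definition dotv (R : realType) (d : nat) (u v : 'rV[R]_d) : R :=
  \sum_(l < d) u 0 l * v 0 l.

Definition sqnorm (R : realType) (d : nat) (u : 'rV[R]_d) : R := dotv u u.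

Definition class_card (n NC : nat) (y : 'I_n -> 'I_NC) (k : 'I_NC) : nat :=
  #|[set i : 'I_n | y i == k]|.

(* symmetric cross-entropy loss; z i = sample embeddings, cexp i = c_{y_i} *)
Definition L_SCE (R : realType) (d n : nat) (z cexp : 'I_n -> 'rV[R]_d) : R :=
  - (n%:R)^-1 * \sum_(i < n)
      ln (expR (dotv (z i) (cexp i)) / \sum_(j < n) expR (dotv (z i) (cexp j)))
  - (n%:R)^-1 * \sum_(i < n)
      ln (expR (dotv (cexp i) (z i)) / \sum_(j < n) expR (dotv (cexp i) (z j))).

(* Main.v *)
Require Import Defs.
From mathcomp Require Import all_boot all_order all_algebra.
From mathcomp Require Import all_classical all_reals all_analysis.
From mathcomp Require Import lra.
Import Order.TTheory GRing.Theory Num.Theory.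
Local Open Scope ring_scope.

Lemma jensen_ln (R : realType) (m : nat) (b : 'I_m.+1 -> R) :
  (m.+1%:R)^-1 * \sum_j b j <= ln (\sum_j expR (b j)).
Proof.
set mu := _ * _.
have Spos : 0 < \sum_j expR (b j).
  rewrite (bigD1 ord0) //=; apply: ltr_wpDr; last exact: expR_gt0.
  by apply: sumr_ge0 => j _; exact: expR_ge0.
rewrite -[X in X <= _]expRK ler_ln ?posrE ?expR_gt0 //.
have H : \sum_(j < m.+1) expR mu * (1 + (b j - mu)) <= \sum_j expR (b j).
  apply: ler_sum => j _.
  have -> : expR (b j) = expR mu * expR (b j - mu) by rewrite -expRD addrC subrK.
  by apply: ler_wpM2l; [exact: expR_ge0 | exact: expR_ge1Dx].
apply: le_trans H.
rewrite -mulr_sumr big_split /= sumrB !sumr_const !card_ord.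
have -> : \sum_(j < m.+1) b j - mu *+ m.+1 = 0.
  rewrite /mu -mulr_natl mulrA mulfV ?mul1r ?subrr //.
rewrite addr0 ler_peMr ?expR_ge0 //.
by rewrite ler1n.
Qed.

Lemma dotvC (R : realType) (d : nat) (u v : 'rV[R]_d) : dotv u v = dotv v u.
Proof. by apply: eq_bigr => l _; rewrite mulrC. Qed.

Lemma ln_term (R : realType) (a S : R) : 0 < S -> ln (expR a / S) = a - ln S.
Proof. by move=> hS; rewrite ln_div ?posrE ?expR_gt0 // expRK. Qed.

Lemma sum_pos (R : realType) (m : nat) (b : 'I_m.+1 -> R) : 0 < \sum_j expR (b j).
Proof.
rewrite (bigD1 ord0) //=; apply: ltr_wpDr; last exact: expR_gt0.
by apply: sumr_ge0 => j _; exact: expR_ge0.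
Qed.

Lemma class_sum (R : realType) (d n NC : nat) (y : 'I_n -> 'I_NC) (c : 'I_NC -> 'rV[R]_d) (u : 'rV[R]_d) :
  \sum_(j < n) dotv u (c (y j)) = \sum_(k < NC) (class_card y k)%:R * dotv u (c k).
Proof.
rewrite (partition_big y xpredT) //=.
apply: eq_bigr => k _.
rewrite (eq_bigr (fun=> dotv u (c k))); last by move=> j /eqP ->.
rewrite sumr_const /class_card mulr_natl; congr (_ *+ _).
by apply: eq_card => j; rewrite inE.
Qed.

Theorem theorem3 (R : realType) (d n NC : nat)
  (z : 'I_n -> 'rV[R]_d) (y : 'I_n -> 'I_NC) (c : 'I_NC -> 'rV[R]_d)
  (hz : forall i, sqnorm (z i) = 1) (hc : forall k, sqnorm (c k) = 1) :
  L_SCE z (fun i => c (y i)) >=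
    - (2 / n%:R) * \sum_(i < n) dotv (z i) (c (y i))
    + (2 / n%:R) * \sum_(i < n) \sum_(k < NC)
        ((class_card y k)%:R / n%:R) * dotv (z i) (c k).
Proof.
clear hz hc; case: n z y => [|m] z y.
  by rewrite /L_SCE !big_ord0 !mulr0 ?oppr0 ?subr0 ?addr0.
rewrite /L_SCE.
set n := m.+1.
rewrite [X in _ <= _ * X - _](eq_bigr (fun i => dotv (z i) (c (y i)) - ln (\sum_(j < n) expR (dotv (z i) (c (y j))))));
  last by move=> i _; rewrite ln_term // sum_pos.
rewrite [X in _ <= _ - _ * X](eq_bigr (fun i => dotv (z i) (c (y i)) - ln (\sum_(j < n) expR (dotv (c (y i)) (z j)))));
  last by move=> i _; rewrite ln_term ?sum_pos // dotvC.
rewrite !sumrB.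
set T := \sum_(i < n) n%:R^-1 * \sum_(j < n) dotv (z i) (c (y j)).
have A : T <= \sum_(i < n) ln (\sum_(j < n) expR (dotv (z i) (c (y j)))).
  by apply: ler_sum => i _; exact: jensen_ln.
have B : T <= \sum_(i < n) ln (\sum_(j < n) expR (dotv (c (y i)) (z j))).
  have -> : T = \sum_(i < n) n%:R^-1 * \sum_(j < n) dotv (c (y i)) (z j).
    rewrite /T -!mulr_sumr exchange_big /=; congr (_ * _).
    by apply: eq_bigr => i _; apply: eq_bigr => j _; rewrite dotvC.
  by apply: ler_sum => i _; exact: jensen_ln.
have D : \sum_(i < n) \sum_(k < NC) ((class_card y k)%:R / n%:R) * dotv (z i) (c k) = T.
  apply: eq_bigr => i _; rewrite class_sum mulr_sumr.
  by apply: eq_bigr => k _; rewrite mulrA [_ * _%:R]mulrC.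
rewrite D.
have np : 0 < n%:R^-1 :> R by rewrite invr_gt0 ltr0n.
have A' := ler_wpM2l (ltW np) A.
have B' := ler_wpM2l (ltW np) B.
rewrite /Order.ge /= -!/(n%:R^-1 * _) !mulrBr.
lra.
Qed.
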